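(* Every almost reciprocal Puiseux monoid is a length-finite-factorization monoid (LFFM).
   Context: A Puiseux monoid is an additive submonoid of $(\mathbb{Q}_{\ge 0},+)$. An almost reciprocal Puiseux monoid is a monoid of the form $\langle \frac{c_n}{d_n} \mid n \in \mathbb{N} \rangle$, where $(d_n)_{n\ge 1}$ is a strictly increasing sequence of positive integers whose terms are pairwise relatively prime, and $(c_n)_{n \ge 1}$ is a sequence of positive integers with $\gcd(c_n,d_n)=1$ for every $n$. An atom of $M$ is a nonzero element $a$ such that $a=x+y$ with $x,y\in M$ forces $x=0$ or $y=0$; $M$ is atomic if each element is a finite sum of atoms. For nonzero $x \in M$, a factorization of $x$ is a formal (unordered) sum $a_1+\dots+a_\ell$ of atoms whose value is $x$, of length $\ell$; $\mathsf{Z}(x,\ell)$ denotes the set of factorizations of $x$ of length $\ell$. $M$ is an LFFM if $M$ is atomic and $\mathsf{Z}(x,\ell)$ is finite for every nonzero $x \in M$ and every $\ell \in \mathbb{N}$. *)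

(* Defs.v *)
From HB Require Import structures.
From mathcomp Require Import all_boot all_order all_algebra.
Set Implicit Arguments. Unset Strict Implicit. Unset Printing Implicit Defensive.
Import Order.TTheory GRing.Theory Num.Theory.
Local Open Scope ring_scope.

(* The submonoid of (Q,+) generated by g : nat -> rat: all finite sums
   of generators (a multiset of indices s; the empty sum gives 0). *)
Definition gen_monoid (g : nat -> rat) (x : rat) : Prop :=
  exists s : seq nat, x = \sum_(i <- s) g i.

Definition frac_seq (c d : nat -> nat) (n : nat) : rat :=
  (c n)%:R / (d n)%:R.

(* Hypotheses of an almost reciprocal presentation (indices start at 0). *)
Definition almost_reciprocal_data (c d : nat -> nat) : Prop :=
  [/\ (0 < d 0)%N,
      (forall n, (d n < d n.+1)%N),
      (forall m n, m <> n -> coprime (d m) (d n)),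
      (forall n, (0 < c n)%N) &
      (forall n, coprime (c n) (d n))].

Definition almost_reciprocal (M : rat -> Prop) : Prop :=
  exists c d : nat -> nat, almost_reciprocal_data c d /\
    (forall x, M x <-> gen_monoid (frac_seq c d) x).

Definition is_atom (M : rat -> Prop) (a : rat) : Prop :=
  M a /\ a != 0 /\
  forall x y, M x -> M y -> a = x + y -> x = 0 \/ y = 0.

Definition atomic (M : rat -> Prop) : Prop :=
  forall x, M x -> exists s : seq rat,
    (forall a, a \in s -> is_atom M a) /\ x = \sum_(a <- s) a.

(* s (a list of atoms, read up to permutation) is a factorization of x of length l *)
Definition is_factorization_len (M : rat -> Prop) (x : rat) (l : nat)
  (s : seq rat) : Prop :=
  (forall a, a \in s -> is_atom M a) /\ size s = l /\ \sum_(a <- s) a = x.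

Definition finite_Z (M : rat -> Prop) (x : rat) (l : nat) : Prop :=
  exists L : seq (seq rat), forall s, is_factorization_len M x l s ->
    exists2 t, t \in L & perm_eq s t.

Definition LFFM (M : rat -> Prop) : Prop :=
  atomic M /\ forall x l, M x -> x != 0 -> finite_Z M x l.

(* Main.v *)
Require Import Defs.
From mathcomp Require Import all_boot all_order all_algebra.
From Stdlib Require Import Classical.
From mathcomp Require Import ring.
Set Implicit Arguments. Unset Strict Implicit. Unset Printing Implicit Defensive.
Import Order.TTheory GRing.Theory Num.Theory.
Local Open Scope ring_scope.

Definition g_int (y : rat) (P : nat) := exists z : int, y * P%:R = z%:~R.

Lemma sum_good (N : nat) (u : seq rat) :
  (forall b, b \in u -> exists P, (0 < P)%N /\ coprime P N /\ g_int b P) ->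
  exists P, (0 < P)%N /\ coprime P N /\ g_int (\sum_(b <- u) b) P.
Proof.
elim: u => [|b u IH] H.
  exists 1%N; split=> //; split; first exact: coprime1n.
  by exists 0; rewrite big_nil mul0r.
have [P1 [P1p [P1c [z1 Hz1]]]] := H b (mem_head _ _).
have [P2 [P2p [P2c [z2 Hz2]]]] : exists P, (0 < P)%N /\ coprime P N /\ g_int (\sum_(b <- u) b) P.
  by apply: IH => a au; apply: H; rewrite in_cons au orbT.
exists (P1 * P2)%N; split; first by rewrite muln_gt0 P1p.
split; first by rewrite coprimeMl P1c.
exists (z1 * P2%:Z + z2 * P1%:Z).
rewrite big_cons natrM rmorphD /= !rmorphM /= mulrDl.
rewrite mulrA Hz1 mulrCA Hz2 -!intrM.
by rewrite !intrM mulrC [z2%:~R * _]mulrC.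

Qed.

Lemma rat_div (a b : nat) (z : int) : a%:R = z%:~R * b%:R :> rat -> (b %| a)%N.
Proof.
move=> E.
have E' : a%:Z = z * b%:Z.
  by apply: (@intr_inj rat); rewrite intrM; exact: E.
have := dvdz_mull z (dvdzz b%:Z); rewrite -E' dvdzE /=.
by [].
Qed.

Lemma d_gt (c d : nat -> nat) : almost_reciprocal_data c d -> forall n, (n < d n)%N.
Proof.
case=> d0 dS _ _ _; elim=> [|n IH] //.
by apply: leq_ltn_trans (dS n).
Qed.

Lemma d_lt (c d : nat -> nat) : almost_reciprocal_data c d ->
  forall m n, (m < n)%N -> (d m < d n)%N.
Proof.
case=> d0 dS _ _ _ m n; elim: n => [|n IH] //.
rewrite ltnS leq_eqVlt => /orP [/eqP -> //|/IH h].
exact: ltn_trans h (dS n).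
Qed.

Lemma d_inj (c d : nat -> nat) : almost_reciprocal_data c d -> injective d.
Proof.
move=> H m n E; case: (ltngtP m n) => // h; have := d_lt H h; by rewrite E ltnn.
Qed.

Lemma g_pos (c d : nat -> nat) : almost_reciprocal_data c d ->
  forall n, 0 < frac_seq c d n.
Proof.
move=> H n; have [_ _ _ c0 _] := H; have dn := d_gt H n.
rewrite /frac_seq divr_gt0 // ltr0n //; exact: leq_ltn_trans dn.
Qed.

Lemma g_mul (c d : nat -> nat) : almost_reciprocal_data c d ->
  forall n, frac_seq c d n * (d n)%:R = (c n)%:R.
Proof.
move=> H n; have dn := d_gt H n.
rewrite /frac_seq divfK // pnatr_eq0 -lt0n; exact: leq_ltn_trans dn.
Qed.

Lemma sum_pos (c d : nat -> nat) : almost_reciprocal_data c d ->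
  forall u : seq nat, u != [::] -> 0 < \sum_(i <- u) frac_seq c d i.
Proof.
move=> H [|j u] // _; rewrite big_cons ltr_wpDr ?g_pos //.
by apply: sumr_ge0 => i _; apply: ltW; apply: g_pos.
Qed.

Lemma no_self (c d : nat -> nat) : almost_reciprocal_data c d ->
  forall (u : seq nat) n, \sum_(i <- u) frac_seq c d i = frac_seq c d n ->
  (1 < size u)%N -> n \notin u.
Proof.
move=> H u n E su; apply/negP => nu.
have P := perm_to_rem nu.
move: E; rewrite (perm_big _ P) big_cons => E.
have : \sum_(i <- rem n u) frac_seq c d i = 0.
  by apply: (addrI (frac_seq c d n)); rewrite E addr0.
have : rem n u != [::].
  by rewrite -size_eq0 size_rem //; case: (size u) su => [|[|k]].
move/(sum_pos H) => h h0; by rewrite h0 ltxx in h.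
Qed.

Lemma other_good (c d : nat -> nat) : almost_reciprocal_data c d ->
  forall (u : seq nat) n, n \notin u ->
  exists P, (0 < P)%N /\ coprime P (d n) /\ g_int (\sum_(i <- u) frac_seq c d i) P.
Proof.
move=> H u n nu.
have -> : \sum_(i <- u) frac_seq c d i = \sum_(b <- map (frac_seq c d) u) b by rewrite big_map.
apply: sum_good => b /mapP [m mu ->].
have [_ _ cop _ _] := H.
exists (d m); split; first exact: leq_ltn_trans (d_gt H m).
split; first by apply: cop => E; rewrite -E mu in nu.
by exists (c m)%:Z; rewrite g_mul.
Qed.

Lemma d1 (c d : nat -> nat) : almost_reciprocal_data c d ->
  forall (u : seq nat) n, n \notin u ->
  \sum_(i <- u) frac_seq c d i = frac_seq c d n -> d n = 1%N.
Proof.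
move=> H u n nu E; have [P [P0 [Pc [z Hz]]]] := other_good H nu.
have [_ _ _ _ cd] := H.
rewrite E in Hz.
have : (d n %| c n * P)%N.
  apply: (@rat_div _ _ z); rewrite natrM -Hz -(g_mul H n).
  by rewrite mulrAC.
rewrite Gauss_dvdr; last by rewrite coprime_sym.
move=> h; apply/eqP; move: Pc; rewrite /coprime.
by rewrite (gcdn_idPr h).
Qed.

Lemma split_nz (c d : nat -> nat) : almost_reciprocal_data c d ->
  forall n x y, gen_monoid (frac_seq c d) x -> gen_monoid (frac_seq c d) y ->
  frac_seq c d n = x + y -> x <> 0 -> y <> 0 ->
  exists u : seq nat, [/\ n \notin u, \sum_(i <- u) frac_seq c d i = x + y &
    forall j, j \in u -> j <> n].
Proof.
move=> H n x y [s ->] [t ->] E xn yn.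
have nu : n \notin s ++ t.
  apply: (no_self H); first by rewrite big_cat.
  rewrite size_cat; case: s xn {E} => [|? s] xn; first by rewrite big_nil in xn.
  case: t yn => [|? t] yn; first by rewrite big_nil in yn.
  by rewrite /= addnS.
exists (s ++ t); split=> //; first by rewrite big_cat.
by move=> j ju jn; rewrite -jn ju in nu.
Qed.

Lemma atom_big (c d : nat -> nat) : almost_reciprocal_data c d ->
  forall n, (1 < d n)%N -> is_atom (gen_monoid (frac_seq c d)) (frac_seq c d n).
Proof.
move=> H n dn; split; first by exists [:: n]; rewrite big_seq1.
split; first by rewrite gt_eqF // g_pos.
move=> x y Gx Gy E.
case: (altP (x =P 0)) => [->|xn]; first by left.
case: (altP (y =P 0)) => [->|yn]; first by right.
have [u [nu Su _]] := split_nz H Gx Gy E (elimN eqP xn) (elimN eqP yn).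
have := d1 H nu; rewrite Su -E => /(_ erefl) d1n.
by rewrite d1n in dn.
Qed.

Lemma atom_gen (c d : nat -> nat) : almost_reciprocal_data c d ->
  forall a, is_atom (gen_monoid (frac_seq c d)) a -> exists n, a = frac_seq c d n.
Proof.
move=> H a [[[|i s] Es] [an Hat]]; first by rewrite Es big_nil eqxx in an.
rewrite big_cons in Es.
have [||h|h] := Hat (frac_seq c d i) (\sum_(j <- s) frac_seq c d j) _ _ Es.
- by exists [:: i]; rewrite big_seq1.
- by exists s.
- by have := g_pos H i; rewrite h ltxx.
- by exists i; rewrite Es h addr0.
Qed.

Lemma gen_atoms (c d : nat -> nat) : almost_reciprocal_data c d ->
  forall m, exists s : seq rat,
    (forall a, a \in s -> is_atom (gen_monoid (frac_seq c d)) a) /\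
    frac_seq c d m = \sum_(a <- s) a.
Proof.
move=> H m.
have dpos : forall j, (0 < d j)%N by move=> j; exact: leq_ltn_trans (d_gt H j).
case: (ltnP 1 (d m)) => dm.
  exists [:: frac_seq c d m]; split; last by rewrite big_seq1.
  by move=> a; rewrite inE => /eqP ->; apply: atom_big.
have dm1 : d m = 1%N by apply/eqP; rewrite eqn_leq dm dpos.
case: (classic (exists x y, [/\ gen_monoid (frac_seq c d) x, gen_monoid (frac_seq c d) y,
   frac_seq c d m = x + y, x <> 0 & y <> 0])).
  move=> [x [y [Gx Gy E xn yn]]].
  have [u [nu Su Hu]] := split_nz H Gx Gy E xn yn.
  exists (map (frac_seq c d) u); split; last by rewrite big_map Su.
  move=> a /mapP [j ju ->]; apply: atom_big => //.
  have := Hu j ju => jm.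
  rewrite ltn_neqAle dpos andbT; apply/negP => /eqP E1.
  by apply: jm; apply: (d_inj H); rewrite dm1 E1.
move=> Hno; exists [:: frac_seq c d m]; split; last by rewrite big_seq1.
move=> a; rewrite inE => /eqP ->; split; first by exists [:: m]; rewrite big_seq1.
split; first by rewrite gt_eqF // g_pos.
move=> x y Gx Gy E.
case: (altP (x =P 0)) => [->|xn]; first by left.
case: (altP (y =P 0)) => [->|yn]; first by right.
exfalso; apply: Hno; exists x, y; split=> //; exact/eqP.
Qed.

Lemma atomicG (c d : nat -> nat) : almost_reciprocal_data c d ->
  atomic (gen_monoid (frac_seq c d)).
Proof.
move=> H x [s ->]; elim: s => [|i s [t [Ht Et]]].
  by exists [::]; split=> //; rewrite !big_nil.
have [r [Hr Er]] := gen_atoms H i.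
exists (r ++ t); split.
  by move=> a; rewrite mem_cat => /orP [/Hr|/Ht].
by rewrite big_cons big_cat Er Et.
Qed.

Lemma cop_bound (c d : nat -> nat) : almost_reciprocal_data c d ->
  forall q, (0 < q)%N -> exists B, forall n, (B <= n)%N -> coprime q (d n).
Proof.
move=> H q; have [_ _ cop _ _] := H.
elim: q {-2}q (leqnn q) => [|Q IH] q hq q0; first by case: q hq q0.
case: (classic (exists n0, ~~ coprime q (d n0))); last first.
  move=> Hn; exists 0%N => n _; apply/negPn/negP => h; apply: Hn; by exists n.
move=> [n0 hn0].
set g := gcdn q (d n0).
have g0 : (0 < g)%N by rewrite gcdn_gt0 q0.
have g1 : (1 < g)%N by rewrite ltn_neqAle g0 andbT eq_sym.
have gq : (g %| q)%N by apply: dvdn_gcdl.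
have q'0 : (0 < (q %/ g)%N)%N by rewrite divn_gt0 // dvdn_leq.
have [B HB] := IH ((q %/ g)%N) (leq_trans (ltn_Pdiv g1 q0) hq) q'0.
exists (maxn B n0.+1) => n; rewrite geq_max => /andP [Bn n0n].
rewrite -(divnK gq) coprimeMl HB //=.
apply: (coprime_dvdl (dvdn_gcdr q (d n0))).
apply: cop => E; by rewrite E ltnn in n0n.
Qed.

Lemma sum_split (s : seq rat) (a : rat) :
  \sum_(b <- s) b = (count_mem a s)%:R * a + \sum_(b <- s | b != a) b.
Proof.
elim: s => [|b s IH]; first by rewrite !big_nil mul0r addr0.
rewrite !big_cons IH /=; case: (altP (b =P a)) => [->|ba] /=.
  by rewrite add1n mulrSr mulrDl mul1r; ring.
by rewrite add0n addrCA.
Qed.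

Lemma natzR (n : nat) : (n%:Z)%:~R = n%:R :> rat.
Proof. by []. Qed.

Lemma fact_bound (c d : nat -> nat) : almost_reciprocal_data c d ->
  forall x l s n, is_factorization_len (gen_monoid (frac_seq c d)) x l s ->
  coprime `|denq x|%N (d n) -> frac_seq c d n \in s -> (d n <= l)%N.
Proof.
move=> H x l s n [Hs [sz Ex]] cq ns.
have [_ _ cop _ cd] := H.
set a := frac_seq c d n in ns.
set k := count_mem a s.
have k0 : (0 < k)%N by rewrite lt0n; apply/eqP => /count_memPn; rewrite ns.
have kl : (k <= l)%N by rewrite -sz count_size.
have [P [P0 [Pc [z Hz]]]] :
  exists P, (0 < P)%N /\ coprime P (d n) /\ g_int (\sum_(b <- s | b != a) b) P.
  rewrite -big_filter; apply: sum_good => b; rewrite mem_filter => /andP [ba bs].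
  have [m bm] := atom_gen H (Hs b bs).
  exists (d m); split; first exact: leq_ltn_trans (d_gt H m).
  split; first by apply: cop => E; rewrite bm E eqxx in ba.
  by exists (c m)%:Z; rewrite bm g_mul.
rewrite (sum_split s a) in Ex.
set q := `|denq x|%N.
have qE : (q%:Z) = denq x by rewrite gez0_abs // ltW // denq_gt0.
have hx : x * q%:R = (numq x)%:~R by rewrite numqE -qE.
have : (d n %| k * c n * P * q)%N.
  apply: (@rat_div _ _ (numq x * P%:Z - z * q%:Z)).
  rewrite rmorphB /= !rmorphM /= !natzR -hx -Hz -Ex -(g_mul H n).

  rewrite /k /a; ring.
rewrite Gauss_dvdl; last by rewrite coprime_sym.
rewrite Gauss_dvdl; last by rewrite coprime_sym.
rewrite Gauss_dvdl; last by rewrite coprime_sym.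
move/(dvdn_leq k0) => h; exact: leq_trans h kl.
Qed.

Fixpoint lists (V : seq rat) (l : nat) : seq (seq rat) :=
  if l is l'.+1 then [seq a :: t | a <- V, t <- lists V l'] else [:: [::]].

Lemma lists_mem (V : seq rat) (s : seq rat) :
  (forall a, a \in s -> a \in V) -> s \in lists V (size s).
Proof.
elim: s => [|b s IH] H /=; first by rewrite inE.
apply: (allpairs_f (fun a t => a :: t)); first by apply: H; rewrite inE eqxx.
by apply: IH => a ha; apply: H; rewrite inE ha orbT.
Qed.

Lemma LFFM_gen (c d : nat -> nat) : almost_reciprocal_data c d ->
  LFFM (gen_monoid (frac_seq c d)).
Proof.
move=> H; split; first exact: atomicG.
move=> x l _ _.
have q0 : (0 < `|denq x|)%N by rewrite absz_gt0 gt_eqF // denq_gt0.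
have [B HB] := cop_bound H q0.
exists (lists (map (frac_seq c d) (iota 0 (maxn B l))) l) => s Hf.
exists s; last exact: perm_refl.
have [Hs [sz _]] := Hf; rewrite -sz; apply: lists_mem => a ha.
have [n an] := atom_gen H (Hs a ha).
rewrite an; apply: map_f; rewrite mem_iota add0n /=.
case: (ltnP n B) => nB; first by rewrite leq_max nB.
have := fact_bound H Hf (HB n nB); rewrite -an => /(_ ha) dl.

rewrite leq_max; apply/orP; right; rewrite sz; exact: leq_trans (d_gt H n) dl.
Qed.

From Stdlib Require Import FunctionalExtensionality PropExtensionality.

Theorem corollary4p11 (M : rat -> Prop) : almost_reciprocal M -> LFFM M.
Proof.
move=> [c [d [H HM]]].
have -> : M = gen_monoid (frac_seq c d).
  by apply: functional_extensionality => x; apply: propositional_extensionality.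
exact: LFFM_gen.
Qed.
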